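(* Let $N\ge1$ and let $Y_1,\dots,Y_N$ be independent random variables, where $Y_i$ is geometrically distributed with success probability $p_i\in(0,1]$. Then $$\mathbb{P}\Big(\sum_{i=1}^NY_i>\frac{N^2}{4\sum_{i=1}^Np_i}\Big)\ge1-\frac{16}{9N}.$$
   Context: A random variable $Y$ is geometric with success probability $p$ if $\mathbb{P}(Y=s)=(1-p)^{s-1}p$ for $s=1,2,\dots$. *)

(* Defs.v *)
From Stdlib Require Import Reals Lra Lia.
Open Scope R_scope.

Definition geom_pmf (p : R) (s : nat) : R :=
  match s with
  | O => 0
  | S k => (1 - p) ^ k * p
  end.

(* Law of Y_0 + ... + Y_(n-1) for independent Y_i ~ Geom(p i):
   the n-fold convolution of the geometric pmfs (independence means the
   law of the sum is the convolution of the marginal laws). *)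
Fixpoint law_sum (p : nat -> R) (n : nat) (s : nat) : R :=
  match n with
  | O => if Nat.eqb s 0 then 1 else 0
  | S m => sum_f_R0 (fun k => geom_pmf (p m) k * law_sum p m (s - k)) s
  end.

Fixpoint sumR (p : nat -> R) (n : nat) : R :=
  match n with
  | O => 0
  | S m => sumR p m + p m
  end.

(* P(Y_0 + ... + Y_(n-1) > t) is the value l of the series
   sum_s [s > t] law_sum p n s. *)
Definition tail_series (p : nat -> R) (n : nat) (t : R) (s : nat) : R :=
  if Rlt_dec t (INR s) then law_sum p n s else 0.

(* Main.v *)
Require Import Defs.
From Stdlib Require Import Reals.
From Stdlib Require Import Lra Lia.
Open Scope R_scope.

Lemma swap_sum (a b : nat -> R) (M : nat) :
  sum_f_R0 (fun s => sum_f_R0 (fun k => a k * b (s - k)%nat) s) M =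
  sum_f_R0 (fun k => a k * sum_f_R0 b (M - k)) M.
Proof.
  induction M as [|M IH].
  - simpl. reflexivity.
  - rewrite (tech5 (fun s => sum_f_R0 (fun k => a k * b (s - k)%nat) s) M).
    rewrite (tech5 (fun k => a k * sum_f_R0 b (S M - k)) M), IH. cbv beta.
    rewrite (tech5 (fun k => a k * b (S M - k)%nat) M).
    rewrite (sum_eq (fun k => a k * sum_f_R0 b (S M - k))
       (fun k => a k * sum_f_R0 b (M - k) + a k * b (S M - k)%nat) M).
    + rewrite sum_plus. rewrite Nat.sub_diag. simpl. ring.
    + intros i Hi. replace (S M - i)%nat with (S (M - i)) by lia. simpl. ring.
Qed.

Lemma exp_le (x y : R) : x <= y -> exp x <= exp y.
Proof. intros [H|H]. left; apply exp_increasing; auto. subst; lra. Qed.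

Lemma exp_INR (n : nat) (x : R) : exp (INR n * x) = exp x ^ n.
Proof.
  induction n. simpl. rewrite Rmult_0_l. apply exp_0.
  rewrite S_INR. simpl. rewrite <- IHn. rewrite <- exp_plus. f_equal. ring.
Qed.

Lemma geom_nonneg (p : R) k : 0 < p <= 1 -> 0 <= geom_pmf p k.
Proof.
  intros Hp. destruct k; simpl. lra.
  apply Rmult_le_pos; [apply pow_le|]; lra.
Qed.

Lemma law_nonneg (p : nat -> R) n :
  (forall i, (i < n)%nat -> 0 < p i <= 1) -> forall s, 0 <= law_sum p n s.
Proof.
  induction n; intros Hp s; simpl.
  - destruct (Nat.eqb s 0); lra.
  - apply cond_pos_sum. intro k. apply Rmult_le_pos.
    apply geom_nonneg. apply Hp; lia. apply IHn. intros; apply Hp; lia.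
Qed.

Definition A (p : nat -> R) n z M := sum_f_R0 (fun s => law_sum p n s * z ^ s) M.

Lemma geom_sum (p z : R) M : 0 < p <= 1 -> 0 < z <= 1 ->
  sum_f_R0 (fun k => geom_pmf p k * z ^ k) M =
  p * z * (1 - ((1 - p) * z) ^ M) / (1 - (1 - p) * z).
Proof.
  intros Hp Hz.
  assert (Hq : 1 - (1 - p) * z <> 0) by nra.
  induction M.
  - simpl. field. auto.
  - rewrite tech5. rewrite IHM. simpl geom_pmf.
    rewrite !Rpow_mult_distr. simpl pow. field. auto.
Qed.

Definition G (p z : R) := p * z / (1 - (1 - p) * z).

Fixpoint prodG (p : nat -> R) z n :=
  match n with O => 1 | S m => prodG p z m * G (p m) z end.

Lemma G_nonneg p z : 0 < p <= 1 -> 0 < z <= 1 -> 0 <= G p z.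
Proof.
  intros. unfold G. unfold Rdiv. apply Rmult_le_pos. nra.
  left. apply Rinv_0_lt_compat. nra.
Qed.

Lemma prodG_nonneg p z n : (forall i, (i < n)%nat -> 0 < p i <= 1) -> 0 < z <= 1 ->
  0 <= prodG p z n.
Proof.
  induction n; intros; simpl. lra.
  apply Rmult_le_pos. apply IHn; auto. apply G_nonneg; auto.
Qed.

Lemma A_step p n z M : 
  A p (S n) z M = sum_f_R0 (fun k => (geom_pmf (p n) k * z ^ k) * A p n z (M - k)) M.
Proof.
  unfold A. rewrite <- swap_sum. apply sum_eq. intros s _.
  simpl law_sum. rewrite Rmult_comm, scal_sum. apply sum_eq. intros k Hk.
  replace (z ^ s) with (z ^ k * z ^ (s - k)).
  ring. rewrite <- pow_add. f_equal. lia.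
Qed.

Lemma A_nonneg p n z M : (forall i, (i < n)%nat -> 0 < p i <= 1) -> 0 < z <= 1 ->
  0 <= A p n z M.
Proof.
  intros. unfold A. apply cond_pos_sum. intro s. apply Rmult_le_pos.
  apply law_nonneg; auto. apply pow_le; lra.
Qed.

Lemma A_mono p n z M1 M2 : (forall i, (i < n)%nat -> 0 < p i <= 1) -> 0 < z <= 1 ->
  (M1 <= M2)%nat -> A p n z M1 <= A p n z M2.
Proof.
  intros Hp Hz H. induction H. lra.
  eapply Rle_trans. apply IHle. unfold A. rewrite tech5.
  assert (0 <= law_sum p n (S m) * z ^ S m).
  { apply Rmult_le_pos. apply law_nonneg; auto. apply pow_le; lra. }
  lra.
Qed.

Lemma A0 p z M : A p 0 z M = 1.
Proof.
  unfold A. induction M. simpl. ring.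
  rewrite tech5. rewrite IHM. simpl. ring.
Qed.

Lemma A_bound p n z M : (forall i, (i < n)%nat -> 0 < p i <= 1) -> 0 < z <= 1 ->
  A p n z M <= prodG p z n.
Proof.
  revert M. induction n; intros M Hp Hz.
  - rewrite A0. simpl. lra.
  - rewrite A_step. simpl prodG.
    assert (Hp' : forall i, (i < n)%nat -> 0 < p i <= 1) by (intros; apply Hp; lia).
    assert (Hpn : 0 < p n <= 1) by (apply Hp; lia).
    apply Rle_trans with (sum_f_R0 (fun k => (geom_pmf (p n) k * z ^ k) * prodG p z n) M).
    + apply sum_Rle. intros k _. apply Rmult_le_compat_l.
      apply Rmult_le_pos. apply geom_nonneg; auto. apply pow_le; lra.
      apply IHn; auto.
    + rewrite <- scal_sum.
      apply Rmult_le_compat_l. apply prodG_nonneg; auto.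
      rewrite geom_sum; auto. unfold G.
      assert (0 < 1 - (1 - p n) * z) by nra.
      unfold Rdiv. apply Rmult_le_compat_r. left; apply Rinv_0_lt_compat; auto.
      assert (0 <= ((1 - p n) * z) ^ M) by (apply pow_le; nra).
      assert (0 <= p n * z) by nra.
      set (q := ((1 - p n) * z) ^ M) in *. nra.
Qed.

Lemma prodG1 p n : (forall i, (i < n)%nat -> 0 < p i <= 1) -> prodG p 1 n = 1.
Proof.
  induction n; intros Hp; simpl. auto.
  rewrite IHn by (intros; apply Hp; lia). unfold G.
  assert (0 < p n) by (apply Hp; lia). field. lra.
Qed.

Fixpoint sumK (p : nat -> R) K n :=
  match n with O => 0 | S m => sumK p K m + (1 - p m) ^ K end.

Lemma sum_prefix (f : nat -> R) K M : (forall k, 0 <= f k) -> (K <= M)%nat ->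
  sum_f_R0 f K <= sum_f_R0 f M.
Proof.
  intros Hf H. induction H. lra. rewrite tech5. specialize (Hf (S m)). lra.
Qed.

Lemma mass_lower p n K : (forall i, (i < n)%nat -> 0 < p i <= 1) ->
  1 - sumK p K n <= A p n 1 (n * K).
Proof.
  induction n; intros Hp.
  - rewrite A0. simpl. lra.
  - assert (Hp' : forall i, (i < n)%nat -> 0 < p i <= 1) by (intros; apply Hp; lia).
    assert (Hpn : 0 < p n <= 1) by (apply Hp; lia).
    specialize (IHn Hp').
    rewrite A_step. simpl sumK.
    apply Rle_trans with (sum_f_R0 (fun k => geom_pmf (p n) k * 1 ^ k * A p n 1 (S n * K - k)) K).
    2:{ apply sum_prefix. intro k. apply Rmult_le_pos. apply Rmult_le_pos.
        apply geom_nonneg; auto. apply pow_le; lra. apply A_nonneg; auto; lra. lia. }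
    apply Rle_trans with (sum_f_R0 (fun k => geom_pmf (p n) k * 1 ^ k * A p n 1 (n * K)) K).
    2:{ apply sum_Rle. intros k Hk. apply Rmult_le_compat_l.
        apply Rmult_le_pos. apply geom_nonneg; auto. apply pow_le; lra.
        apply A_mono; auto. lra. simpl. lia. }
    rewrite <- scal_sum. rewrite geom_sum by lra.
    replace (p n * 1 * (1 - ((1 - p n) * 1) ^ K) / (1 - (1 - p n) * 1))
      with (1 - (1 - p n) ^ K) by (rewrite !Rmult_1_r; field; lra).
    assert (0 <= (1 - p n) ^ K <= 1).
    { split. apply pow_le; lra. apply Rle_trans with (1 ^ K); [apply pow_incr; lra | rewrite pow1; lra]. }
    assert (0 <= sumK p K n).
    { clear -Hp'. induction n; simpl. lra.
      assert (0 <= (1 - p n)^K) by (apply pow_le; assert (0<p n<=1) by (apply Hp'; lia); lra).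
      assert (0 <= sumK p K n) by (apply IHn; intros; apply Hp'; lia). lra. }
    assert (A p n 1 (n*K) * (1 - (1 - p n)^K) >= (1 - sumK p K n) * (1 - (1 - p n)^K)) by nra.
    nra.
Qed.

Lemma sumK_small p n : (forall i, (i < n)%nat -> 0 < p i <= 1) ->
  forall d, 0 < d -> exists K, forall K', (K <= K')%nat -> sumK p K' n <= d.
Proof.
  induction n; intros Hp d Hd.
  - exists O. intros. simpl. lra.
  - assert (Hpn : 0 < p n <= 1) by (apply Hp; lia).
    destruct (IHn (fun i H => Hp i ltac:(lia)) (d/2)) as [K1 HK1]. lra.
    destruct (pow_lt_1_zero (1 - p n)) with (y := d/2) as [K2 HK2].
    rewrite Rabs_right; lra. lra.
    exists (Nat.max K1 K2). intros K' HK. simpl.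
    specialize (HK1 K' ltac:(lia)). specialize (HK2 K' ltac:(lia)).
    pose proof (Rle_abs ((1 - p n) ^ K')). lra.
Qed.

Lemma G_exp p u : 0 < p <= 1 -> 0 < u ->
  G p (1 / (1 + u)) <= / 2 * exp (- / 2 + p / (2 * u)).
Proof.
  intros Hp Hu. unfold G.
  replace (p * (1 / (1 + u)) / (1 - (1 - p) * (1 / (1 + u)))) with (p / (u + p))
    by (field; lra).
  pose proof (exp_ineq1_le (- / 2 + p / (2 * u))).
  apply Rle_trans with (/ 2 * (1 + (- / 2 + p / (2 * u)))); [|lra].
  replace (/ 2 * (1 + (- / 2 + p / (2 * u)))) with ((u + p) / (4 * u)) by (field; lra).
  apply Rmult_le_reg_r with (4 * u * (u + p)). nra.
  replace (p / (u + p) * (4 * u * (u + p))) with (4 * u * p) by (field; lra).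
  replace ((u + p) / (4 * u) * (4 * u * (u + p))) with ((u+p)*(u+p)) by (field; lra).
  pose proof (pow2_ge_0 (u-p)). nra.
Qed.

Lemma prodG_exp p u n : (forall i, (i < n)%nat -> 0 < p i <= 1) -> 0 < u ->
  prodG p (1 / (1 + u)) n <= (/2) ^ n * exp (- INR n / 2 + sumR p n / (2 * u)).
Proof.
  induction n; intros Hp Hu.
  - simpl. replace (-0/2 + 0/(2*u)) with 0 by (field; lra). rewrite exp_0. lra.
  - simpl prodG. assert (Hpn : 0 < p n <= 1) by (apply Hp; lia).
    replace ((/2) ^ S n * exp (- INR (S n) / 2 + sumR p (S n) / (2 * u))) with
      (((/2) ^ n * exp (- INR n / 2 + sumR p n / (2 * u))) * (/ 2 * exp (- / 2 + p n / (2 * u)))).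
    2:{ rewrite S_INR. simpl sumR. simpl pow.
        replace (- (INR n + 1) / 2 + (sumR p n + p n) / (2 * u)) with
          ((- INR n / 2 + sumR p n / (2 * u)) + (- / 2 + p n / (2 * u))) by (field; lra).
        rewrite (exp_plus (- INR n / 2 + sumR p n / (2 * u))). ring. }
    assert (Hz : 0 < 1 / (1 + u) <= 1).
    { split. apply Rdiv_lt_0_compat; lra.
      apply Rmult_le_reg_r with (1+u). lra. field_simplify; lra. }
    assert (Hp' : forall i, (i < n)%nat -> 0 < p i <= 1) by (intros; apply Hp; lia).
    apply Rmult_le_compat.
    apply prodG_nonneg; auto. apply G_nonneg; auto. apply IHn; auto. apply G_exp; auto.
Qed.

Lemma three_quarters n : INR n * (3/4) ^ n <= 16/9.
Proof.
  assert (H : forall m, INR (m + 3) * (3/4) ^ (m + 3) <= 81/64).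
  { induction m. simpl. lra.
    replace (S m + 3)%nat with (S (m + 3)) by lia.
    rewrite S_INR. simpl pow.
    assert (HI : 3 <= INR (m + 3)) by (rewrite plus_INR; simpl; pose proof (pos_INR m); lra).
    assert (0 <= (3/4) ^ (m+3)) by (apply pow_le; lra).
    nra. }
  destruct n as [|[|[|n]]]; [simpl; lra .. |].
  specialize (H n). replace (n + 3)%nat with (S (S (S n))) in H by lia. lra.
Qed.

Lemma exp_quarter : exp (/ 4) <= 3 / 2.
Proof.
  pose proof exp_le_3. rewrite <- (Rinv_r 4) in H by lra.
  replace 4 with (INR 4) in H at 1 by (simpl; lra).
  rewrite exp_INR in H. pose proof (exp_pos (/4)).
  destruct (Rle_dec (exp (/4)) (3/2)); auto.
  exfalso. simpl in H. apply Rnot_le_lt in n.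
  set (x := exp (/4)) in *.
  assert (x * x > 9/4) by nra. assert (x*x*(x*x) > 81/16) by nra. nra.
Qed.

Theorem lemma2p4 (N : nat) (p : nat -> R)
  (HN : (1 <= N)%nat)
  (Hp : forall i, (i < N)%nat -> 0 < p i <= 1) :
  exists l : R,
    infinite_sum (tail_series p N (INR N ^ 2 / (4 * sumR p N))) l /\
    l >= 1 - 16 / (9 * INR N).
Proof.
  set (P := sumR p N).
  set (T := INR N ^ 2 / (4 * P)).
  assert (HNr : 1 <= INR N) by (apply (le_INR 1); auto).
  assert (HP : 0 < P).
  { unfold P. clear -HN Hp. induction N. lia. simpl.
    assert (0 < p N) by (apply Hp; lia).
    destruct N. simpl. lra.
    assert (0 < sumR p (S N)) by (apply IHN; [lia| intros; apply Hp; lia]). lra. }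
  set (f := tail_series p N T).
  assert (Hf : forall s, 0 <= f s).
  { intro s. unfold f, tail_series. destruct (Rlt_dec T (INR s)). apply law_nonneg; auto. lra. }
  set (low := fun s => if Rlt_dec T (INR s) then 0 else law_sum p N s).
  assert (Hsplit : forall M, sum_f_R0 f M + sum_f_R0 low M = A p N 1 M).
  { intro M. rewrite <- sum_plus. unfold A. apply sum_eq. intros s _.
    unfold f, low, tail_series. rewrite pow1. destruct (Rlt_dec T (INR s)); ring. }
  assert (Hlow0 : forall M, 0 <= sum_f_R0 low M).
  { intro M. apply cond_pos_sum. intro s. unfold low. destruct (Rlt_dec T (INR s)).
    lra. apply law_nonneg; auto. }
  assert (HA1 : forall M, A p N 1 M <= 1).
  { intro M. apply Rle_trans with (prodG p 1 N). apply A_bound; auto. lra.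
    rewrite prodG1; auto; lra. }
  set (u := P / INR N).
  assert (Hu : 0 < u) by (unfold u; apply Rdiv_lt_0_compat; lra).
  assert (Hz : 0 < 1 / (1 + u) <= 1).
  { split. apply Rdiv_lt_0_compat; lra.
    apply Rmult_le_reg_r with (1+u). lra. field_simplify; lra. }
  assert (Hlow : forall M, sum_f_R0 low M <= 16 / (9 * INR N)).
  { intro M.
    apply Rle_trans with (exp (u * T) * A p N (1 / (1 + u)) M).
    { unfold A. rewrite scal_sum. apply sum_Rle. intros s _. unfold low.
      destruct (Rlt_dec T (INR s)).
      - apply Rmult_le_pos. apply Rmult_le_pos. apply law_nonneg; auto.
        apply pow_le; lra. left; apply exp_pos.
      - rewrite Rmult_assoc. rewrite <- (Rmult_1_r (law_sum p N s)) at 1.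
        apply Rmult_le_compat_l. apply law_nonneg; auto.
        assert (H1 : (1 + u) ^ s <= exp (u * T)).
        { apply Rle_trans with (exp u ^ s).
          apply pow_incr. pose proof (exp_ineq1_le u). lra.
          rewrite <- exp_INR. apply exp_le. apply Rnot_lt_le in n. nra. }
        assert (H2 : 0 < (1+u)^s) by (apply pow_lt; lra).
        rewrite Rmult_comm. unfold Rdiv. rewrite Rmult_1_l. rewrite pow_inv.
        apply Rmult_le_reg_r with ((1+u)^s). auto.
        rewrite Rmult_assoc. rewrite Rinv_l by lra. lra. }
    apply Rle_trans with (exp (u * T) * ((/2) ^ N * exp (- INR N / 2 + P / (2 * u)))).
    { apply Rmult_le_compat_l. left; apply exp_pos.
      eapply Rle_trans. apply A_bound; auto. apply prodG_exp; auto. }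
    replace (- INR N / 2 + P / (2 * u)) with 0 by (unfold u; field; lra).
    rewrite exp_0. replace (u * T) with (INR N * / 4) by (unfold u, T; field; lra).
    rewrite exp_INR.
    apply Rle_trans with ((3/4) ^ N).
    { rewrite Rmult_1_r. rewrite <- Rpow_mult_distr. apply pow_incr.
      pose proof exp_quarter. pose proof (exp_pos (/4)). lra. }
    pose proof (three_quarters N).
    apply Rmult_le_reg_l with (INR N). lra.
    replace (INR N * (16 / (9 * INR N))) with (16/9) by (field; lra). lra. }
  assert (Hgrow : Un_growing (sum_f_R0 f)).
  { intro n. rewrite tech5. specialize (Hf (S n)). lra. }
  assert (Hub : has_ub (sum_f_R0 f)).
  { exists 1. intros x [n ->]. specialize (Hsplit n). specialize (Hlow0 n).
    specialize (HA1 n). lra. }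
  destruct (growing_cv _ Hgrow Hub) as [l Hl].
  exists l. split. exact Hl.
  pose proof (growing_ineq _ _ Hgrow Hl) as Hle.
  destruct (Rge_dec l (1 - 16 / (9 * INR N))) as [Hge|Hlt]; auto.
  exfalso. apply Rnot_ge_lt in Hlt.
  set (d := 1 - 16 / (9 * INR N) - l).
  destruct (sumK_small p N Hp (d/2)) as [K HK]. unfold d; lra.
  specialize (HK K (le_n K)).
  pose proof (mass_lower p N K Hp).
  specialize (Hsplit (N * K)%nat). specialize (Hlow (N*K)%nat). specialize (Hle (N*K)%nat).
  unfold d in HK. lra.
Qed.
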